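(* Let $X$ be a compact Hausdorff space, $\mu$ a Borel regular non-atomic probability measure, $T:X\to X$ a $\mu$-preserving automorphism, $\mathcal{S}\subseteq\mathrm{GL}(d,\mathbb{R})$ an accessible subgroup, and $\mathcal{T}_{IC}$ the set of measurable $A:X\to\mathcal{S}$ with $\int_X\log^+\|A^{\pm1}\|d\mu<\infty$. Let $A\in\mathcal{T}_{IC}$, $1\le p<\infty$, $\epsilon>0$, $y\in X$ a nonperiodic point, and $\mathbb{R}^d=E\oplus F$ a nontrivial splitting over $y$. Then there exists $B\in\mathcal{T}_{IC}$ with $d_p(A,B)<\epsilon$ such that $B(y)u=v$ for some nonzero vectors $u\in E$ and $v\in A(y)F$.
   Context: Accessible: closed non-empty subgroup acting transitively on $\mathbb{R}P^{d-1}$. $d_p(A,B)=\Delta_p/(1+\Delta_p)$ where $\Delta_p(A,B)=\|A-B\|_p+\|A^{-1}-B^{-1}\|_p$ and $\|A\|_p=(\int_X\|A(x)\|^pd\mu)^{1/p}$. *)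

(* Defs.v *)
From HB Require Import structures.
From mathcomp Require Import all_boot all_order all_algebra.
From mathcomp Require Import all_classical all_reals all_analysis.
Set Implicit Arguments. Unset Strict Implicit. Unset Printing Implicit Defensive.
Import Order.TTheory GRing.Theory Num.Theory.
Import numFieldNormedType.Exports.
Local Open Scope classical_set_scope.
Local Open Scope ring_scope.

Definition borelType (X : ptopologicalType) := g_sigma_algebraType (@open X).

Section Defs.
Variable R : realType.

Definition eucl (d : nat) (v : 'cV[R]_d) : R := Num.sqrt (\sum_(i < d) v i ord0 ^+ 2).

Definition opnorm (d : nat) (M : 'M[R]_d) : R :=
  sup [set eucl (M *m v) | v in [set v : 'cV[R]_d | eucl v = 1]].

Definition logp (t : R) : R := Num.max 0 (ln t).

(* Accessible subgroup of GL(d,R): closed (in GL(d,R)), non-empty subgroup,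
   acting transitively on RP^{d-1}. *)
Definition accessible (d : nat) (S : set 'M[R]_d) : Prop :=
  [/\ S !=set0,
      (forall M, S M -> M \in unitmx),
      [/\ S 1%:M,
          (forall M N, S M -> S N -> S (M *m N)) &
          (forall M, S M -> S (invmx M))],
      (forall M, M \in unitmx -> closure S M -> S M) &
      (forall u v : 'cV[R]_d, u != 0 -> v != 0 ->
         exists2 g, S g & exists2 c : R, c != 0 & g *m u = c *: v)].

Variables (X : ptopologicalType) (mu : probability (borelType X) R).

Definition borel_regular : Prop :=
  forall A : set (borelType X), measurable A ->
    mu A = ereal_inf [set mu (U : set (borelType X)) | U in [set U : set X | open U /\ A `<=` U]]
 /\ mu A = ereal_sup [set mu (K : set (borelType X)) | K in [set K : set X | closed K /\ K `<=` A]].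

Definition non_atomic : Prop :=
  forall A : set (borelType X), measurable A -> (0 < mu A)%E ->
    exists2 B : set (borelType X), measurable B /\ B `<=` A & (0 < mu B < mu A)%E.

Definition mp_automorphism (T : borelType X -> borelType X) : Prop :=
  [/\ measurable_fun setT T,
      exists2 Tinv : borelType X -> borelType X,
        measurable_fun setT Tinv & cancel T Tinv /\ cancel Tinv T &
      forall A : set (borelType X), measurable A -> mu (T @^-1` A) = mu A].

Definition nonperiodic (T : X -> X) (y : X) : Prop :=
  forall n : nat, (0 < n)%N -> iter n T y <> y.

Definition T_IC (d : nat) (S : set 'M[R]_d) (A : borelType X -> 'M[R]_d) : Prop :=
  [/\ (forall x, S (A x)),
      (forall i j, measurable_fun setT (fun x => A x i j)),
      (\int[mu]_x (logp (opnorm (A x)))%:E < +oo)%E &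
      (\int[mu]_x (logp (opnorm (invmx (A x))))%:E < +oo)%E].

Definition Delta_p (d : nat) (p : R) (A B : borelType X -> 'M[R]_d) : \bar R :=
  (Lnorm mu p%:E (fun x => (opnorm (A x - B x))%:E) +
   Lnorm mu p%:E (fun x => (opnorm (invmx (A x) - invmx (B x)))%:E))%E.

Definition dist_p (d : nat) (p : R) (A B : borelType X -> 'M[R]_d) : R :=
  match Delta_p p A B with
  | r%:E => r / (1 + r)
  | _ => 1
  end.

End Defs.

(* Main.v *)
Require Import Defs.
From HB Require Import structures.
From mathcomp Require Import all_boot all_order all_algebra.
From mathcomp Require Import all_classical all_reals all_analysis.
Import Order.TTheory GRing.Theory Num.Theory.
Local Open Scope classical_set_scope.
Local Open Scope ring_scope.

Section nullle.
Local Open Scope ereal_scope.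
Context d (T : measurableType d) (R : realType) (mu : {measure set T -> \bar R}).
Import HBNNSimple.

Lemma null_le_integral (f g : T -> \bar R) (N : set T) : measurable N -> mu N = 0 ->
  (forall x, 0 <= f x) -> (forall x, 0 <= g x) -> (forall x, ~ N x -> f x = g x) ->
  \int[mu]_x f x <= \int[mu]_x g x.
Proof.
move=> mN N0 f0 g0 fg.
rewrite !ge0_integralTE//.
apply: ge_ereal_sup => _ [h hf <-].
pose h1 := proj_nnsfun h (measurableC mN).
pose h2 := proj_nnsfun h mN.
have E1 x : h1 x = (h \_ (~` N)) x by rewrite (mrestrict h (measurableC mN)).
have E2 x : h2 x = (h \_ N) x by rewrite (mrestrict h mN).
have -> : sintegral mu h = sintegral mu h1 + sintegral mu h2.
  rewrite -sintegralD; apply: eq_sintegral => x /=.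
  rewrite !measurable_realfun.mindicE in_setC; case: (boolP (x \in N)) => Nx /=.
    by rewrite mulr0 mulr1 add0r.
  by rewrite mulr1 mulr0 addr0.
have -> : sintegral mu h2 = 0.
  rewrite sintegralET; apply: fsbig1 => r _.
  have [->|r0] := eqVneq r 0%R; first by rewrite mul0e.
  rewrite (@subset_measure0 _ _ _ mu _ N) ?mule0 //.
  move=> x /=; rewrite measurable_realfun.mindicE.
  case: (boolP (x \in N)) => [/set_mem//|_].
  by rewrite mulr0 => /esym/eqP; rewrite (negPf r0).
rewrite adde0; apply: ereal_sup_ubound; exists h1 => // x.
rewrite /= measurable_realfun.mindicE in_setC.
case: (boolP (x \in N)) => /= [_|Nx]; first by rewrite mulr0; exact: g0.
rewrite mulr1 -fg; first exact: hf.
by move=> /mem_set; apply/negP.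
Qed.

Lemma null_eq_integral (f g : T -> \bar R) (N : set T) : measurable N -> mu N = 0 ->
  (forall x, 0 <= f x) -> (forall x, 0 <= g x) -> (forall x, ~ N x -> f x = g x) ->
  \int[mu]_x f x = \int[mu]_x g x.
Proof.
move=> mN N0 f0 g0 fg; apply/eqP; rewrite eq_le (@null_le_integral f g N mN N0 f0 g0 fg).
by rewrite (@null_le_integral g f N mN N0 g0 f0) // => x /fg.
Qed.
End nullle.

Lemma eucl0 (R : realType) d : eucl (0 : 'cV[R]_d) = 0.
Proof.
rewrite /eucl (_ : \sum_(i < d) _ = 0) ?sqrtr0 //.
by apply: big1 => i _; rewrite mxE expr0n.
Qed.

Lemma opnorm0 (R : realType) d : opnorm (0 : 'M[R]_d) = 0.
Proof.
rewrite /opnorm.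
case: (pselect (exists v : 'cV[R]_d, eucl v = 1)) => [[v hv]|nv].
  rewrite (_ : [set _ | _ in _] = [set 0]) ?sup1 //.
  apply/seteqP; split => [_ [w _ <-]|_ ->]; first by rewrite /= mul0mx eucl0.
  by exists v => //; rewrite mul0mx eucl0.
rewrite (_ : [set _ | _ in _] = set0) ?sup0 //.
apply/seteqP; split => [z [w hw _]|//].
by exfalso; apply: nv; exists w.
Qed.

Theorem lemma2p9 (R : realType) (X : ptopologicalType)
  (mu : probability (borelType X) R) (T : borelType X -> borelType X)
  (d : nat) (S : set 'M[R]_d) (A : borelType X -> 'M[R]_d)
  (p eps : R) (y : X) (E F : {vspace 'cV[R]_d}) :
  compact [set: X] -> hausdorff_space X ->
  borel_regular mu -> non_atomic mu ->
  mp_automorphism mu T ->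
  accessible S ->
  T_IC mu S A ->
  1 <= p -> 0 < eps ->
  nonperiodic T y ->
  (E + F)%VS = fullv -> directv (E + F) -> E != 0%VS -> F != 0%VS ->
  exists2 B : borelType X -> 'M[R]_d, T_IC mu S B /\ dist_p mu p A B < eps &
    exists u v : 'cV[R]_d,
      [/\ u != 0, v != 0, u \in E, (exists2 w, w \in F & v = A y *m w) &
          B y *m u = v].
Proof.
move=> _ hX _ nat _ [_ Sunit _ _ Strans] [SA mA iA iAV] p1 eps0 _ _ _ E0 F0.
have my : measurable ([set y] : set (borelType X)).
  rewrite -[[set y]]setCK; apply: measurableC; apply: sub_sigma_algebra.
  have h1 : closed [set y] := compact_closed hX (@compact_set1 X y).
  exact: closed_openC h1.
have muy : mu ([set y] : set (borelType X)) = 0%E.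
  apply/eqP; rewrite eq_le measure_ge0 andbT leNgt; apply/negP => hy.
  have [B [mB By] /andP[B0 Blt]] := nat _ my hy.
  case: (subset_set1 By) => hB; move: B0 Blt; rewrite hB.
    by rewrite measure0 ltxx.
  by rewrite ltxx.
set u := vpick E; set w := vpick F.
have u0 : u != 0 by rewrite vpick0.
have w0 : w != 0 by rewrite vpick0.
have Ayu : A y \in unitmx by apply: Sunit; apply: SA.
have v00 : A y *m w != 0.
  apply: contraNneq w0 => h.
  by rewrite -(mulKmx Ayu w) h mulmx0.
have [g Sg [c c0 hg]] := Strans u (A y *m w) u0 v00.
pose B := fun x : borelType X => if x == y then g else A x.
have By : B y = g by rewrite /B eqxx.
have BA x : ~ [set y] x -> B x = A x.
  by move=> xy; rewrite /B ifN //; apply/eqP.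
have mifB : measurable_fun setT (fun x : borelType X => x == y).
  apply: (measurable_fun_bool true).
  rewrite setTI (_ : _ @^-1` _ = [set y]) //.
  by apply/seteqP; split => x /=; [move=> /eqP | move=> ->; rewrite eqxx].
exists B; last first.
  exists u, (c *: (A y *m w)); split => //.
  - by rewrite scaler_eq0 negb_or c0.
  - exact: memv_pick.
  - by exists (c *: w); [apply: memvZ; exact: memv_pick | rewrite scalemxAr].
  - by rewrite By.
split.
  split.
  - by move=> x; rewrite /B; case: ifP.
  - move=> i j.
    have -> : (fun x => B x i j) = (fun x => if x == y then g i j else A x i j).
      by apply/funext => x; rewrite /B; case: ifP.
    exact: measurable_fun_ifT mifB (measurable_cst _) (mA i j).
  - rewrite (@null_eq_integral _ _ _ mu _ (fun x => (logp (opnorm (A x)))%:E) [set y] my muy).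
    + exact: iA.
    + by move=> x; rewrite lee_fin /logp le_max lexx.
    + by move=> x; rewrite lee_fin /logp le_max lexx.
    + by move=> x /BA ->.
  - rewrite (@null_eq_integral _ _ _ mu _ (fun x => (logp (opnorm (invmx (A x))))%:E) [set y] my muy).
    + exact: iAV.
    + by move=> x; rewrite lee_fin /logp le_max lexx.
    + by move=> x; rewrite lee_fin /logp le_max lexx.
    + by move=> x /BA ->.
have p0 : p != 0 by rewrite gt_eqF // (lt_le_trans ltr01 p1).
have L0 (f : borelType X -> 'M[R]_d) : (forall x, ~ [set y] x -> f x = 0) ->
    Lnorm mu p%:E (fun x => (opnorm (f x))%:E) = 0%E.
  move=> hf; rewrite unlock /Lnorm.
  rewrite (@null_eq_integral _ _ _ mu _ (cst 0%E) [set y] my muy).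
  - by rewrite integral0 poweR0r // invr_neq0.
  - by move=> x; exact: poweR_ge0.
  - by move=> x.
  - by move=> x /hf ->; rewrite opnorm0 abse0 poweR0r.
rewrite /dist_p /Delta_p L0; last by move=> x /BA ->; rewrite subrr.
rewrite L0; last by move=> x /BA ->; rewrite subrr.
by rewrite adde0 /= mul0r.
Qed.
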